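(* In the Mallows setting, $W(1,0)=1$, and for every $N\ge2$ and $0\le k\le N-1$, $$W(N,k)=\theta\,[N-1]_\theta\,W(N-1,k)+\theta^{N-k-1}\,[k]_\theta\,[N-2]_\theta!,$$ where $W(N-1,N-1):=0$.
   Context: Permutations of $\{1,\dots,N\}$ are written in one-line notation; $\mathfrak S_N$ is the set of all of them. An entry $\pi_j$ is a left-to-right maximum if $\pi_j>\pi_i$ for all $i<j$. $\mathrm{inv}(\pi)$ is the number of pairs $i<j$ with $\pi_i>\pi_j$. For $0\le k\le N-1$, a permutation $\pi\in\mathfrak S_N$ is $k$-winnable if the first index $j>k$ such that $\pi_j$ is a left-to-right maximum satisfies $\pi_j=N$. Mallows setting: - $W(N,k)=\sum_{k\text{-winnable }\pi\in\mathfrak S_N}\theta^{\mathrm{inv}(\pi)}$, with $W(N,N):=0$; - $[m]_\theta=1+\theta+\cdots+\theta^{m-1}$ (so $[0]_\theta=0$); - $[m]_\theta!=[1]_\theta[2]_\theta\cdots[m]_\theta$, with $[0]_\theta!=1$. *)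

(* Defs.v *)
From mathcomp Require Import all_boot all_order all_algebra all_fingroup.
Set Implicit Arguments. Unset Strict Implicit. Unset Printing Implicit Defensive.
Import GRing.Theory.
Local Open Scope ring_scope.

(* Permutations of {1..N} are modelled as s : 'S_N = {perm 'I_N}; position
   j (1-based) corresponds to the ordinal j-1, value v (1-based) to v-1.
   So pi_j = (s (j-1)) + 1. *)

Definition ltr_max N (s : 'S_N) (j : 'I_N) : bool :=
  [forall i : 'I_N, (i < j)%N ==> (s i < s j)%N].

Definition inv N (s : 'S_N) : nat :=
  #|[set p : 'I_N * 'I_N | (p.1 < p.2)%N && (s p.2 < s p.1)%N]|.

(* k-winnable: the first 1-based index j > k (i.e. 0-based position >= k)
   that is a left-to-right maximum carries the value N (0-based: N-1). *)
Definition winnable N (k : nat) (s : 'S_N) : bool :=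
  [exists j : 'I_N,
     [&& (k <= j)%N, ltr_max s j,
         [forall i : 'I_N, ((k <= i)%N && (i < j)%N) ==> ~~ ltr_max s i]
       & (s j == N.-1 :> nat)]].

(* Mallows weighted count; W N N = 0 automatically (no position >= N),
   and we also force W N k = 0 for k >= N to match the convention W(N,N):=0. *)
Definition W (R : comRingType) (theta : R) (N k : nat) : R :=
  if (k < N)%N then \sum_(s : 'S_N | winnable k s) theta ^+ inv s else 0.

Definition qint (R : comRingType) (theta : R) (m : nat) : R :=
  \sum_(i < m) theta ^+ i.
Definition qfact (R : comRingType) (theta : R) (m : nat) : R :=
  \prod_(1 <= i < m.+1) qint theta i.

(* Main.v *)
Require Import Defs.
From mathcomp Require Import all_boot all_order all_algebra all_fingroup.
From mathcomp Require Import zify ring.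
Set Implicit Arguments. Unset Strict Implicit. Unset Printing Implicit Defensive.
Import GRing.Theory.

Section Aux.
Local Open Scope nat_scope.

Lemma ltn_bump2 h i j : (bump h i < bump h j) = (i < j).
Proof. by rewrite !ltnNge leq_bump2. Qed.

Lemma ltn_lift2 n (h : 'I_n.+1) (i j : 'I_n) : (lift h i < lift h j) = (i < j).
Proof. exact: ltn_bump2. Qed.

Lemma ltn_lift_self n (h : 'I_n.+1) (i : 'I_n) : (h < lift h i) = (h <= i).
Proof. rewrite /= /bump; case: leqP => /= H; lia. Qed.

Lemma big_recr_lift (T : Type) (idx : T) (op : Monoid.law idx) n (F : 'I_n.+1 -> T) :
  \big[op/idx]_(i < n.+1) F i = op (\big[op/idx]_(i < n) F (lift ord_max i)) (F ord_max).
Proof.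
rewrite big_ord_recr /=; congr (op _ _); apply: eq_bigr => i _.
by congr F; apply: val_inj; rewrite [RHS]lift_max.
Qed.

Lemma sumn_recr_lift n (F : 'I_n.+1 -> nat) :
  \sum_(i < n.+1) F i = \sum_(i < n) F (lift ord_max i) + F ord_max.
Proof. exact: big_recr_lift. Qed.

Lemma ord_max_ltn n (j : 'I_n) : (@ord_max n < j) = false.
Proof. by apply/negbTE; rewrite -leqNgt ltnW. Qed.

Definition invs n (s : 'S_n) := \sum_(j < n) \sum_(i < n) ((i < j) && (s j < s i)).

Lemma invE n (s : 'S_n) : Defs.inv s = invs s.
Proof.
rewrite /Defs.inv /invs exchange_big pair_big /= cardsE -sum1_card big_mkcond /=.
by apply: eq_bigr => p _; rewrite unfold_in; case: ifP.
Qed.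

Lemma sum_leq_cnt n v : \sum_(u < n) (v <= u) = n - v.
Proof.
elim: n => [|n IH]; first by rewrite big_ord0.
rewrite big_ord_recr /= IH; case: leqP => /= H; lia.
Qed.

Lemma invs_lift n (v : 'I_n.+1) (t : 'S_n) :
  invs (lift_perm ord_max v t) = invs t + (n - v).
Proof.
rewrite /invs sumn_recr_lift; congr (_ + _).
  apply: eq_bigr => j _; rewrite sumn_recr_lift lift_max ord_max_ltn addn0.
  by apply: eq_bigr => i _; rewrite !lift_perm_lift !lift_max ltn_lift2.
rewrite sumn_recr_lift ltnn addn0 lift_perm_id.
under eq_bigr => i _ do rewrite lift_perm_lift lift_max ltn_ord ltn_lift_self /=.
rewrite -(sum_leq_cnt n v) (reindex_perm t^-1); apply: eq_bigr => j _; by rewrite permKV.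
Qed.

Lemma ltr_max_lift n (v : 'I_n.+1) (t : 'S_n) j :
  ltr_max (lift_perm ord_max v t) (lift ord_max j) = ltr_max t j.
Proof.
rewrite /ltr_max; apply/forallP/forallP => H i.
  by have := H (lift ord_max i); rewrite !lift_perm_lift !lift_max ltn_lift2.
case: (unliftP ord_max i) => [i'|] ->.
  by rewrite !lift_perm_lift !lift_max ltn_lift2; exact: H.
by rewrite lift_max ord_max_ltn.
Qed.

Lemma ltr_max_top n (v : 'I_n.+1) (t : 'S_n) :
  ltr_max (lift_perm ord_max v t) ord_max = (v == ord_max).
Proof.
set s := lift_perm ord_max v t.
rewrite /ltr_max; apply/forallP/eqP => [H | Ev] .
  have Es : s ((s^-1)%g ord_max) = ord_max by rewrite permKV.
  case: (unliftP ord_max ((s^-1)%g ord_max)) Es => [i'|] -> Es.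
    have := H (lift ord_max i'); rewrite Es lift_max ltn_ord /= /s lift_perm_id.
    by rewrite ltnNge -ltnS ltn_ord.
  by rewrite /s lift_perm_id in Es.
move=> i; case: (unliftP ord_max i) => [i'|] ->; last by rewrite ltnn.
rewrite /s lift_perm_lift lift_perm_id Ev lift_max ltn_ord /=.
rewrite /bump; have h := ltn_ord (t i'); case: leqP => /= h2; lia.
Qed.

Lemma lift_eq_top n (v : 'I_n.+1) (x : 'I_n) : v < n ->
  (lift v x == n.+1.-1 :> nat) = (x == n.-1 :> nat).
Proof.
move=> hv; rewrite /= /bump; have := ltn_ord x; case: leqP => /= h1 h2; apply/eqP/eqP; lia.
Qed.

Lemma lift_max_neq n (x : 'I_n) : (lift ord_max x == n.+1.-1 :> nat) = false.
Proof. by rewrite lift_max /=; apply/negbTE; rewrite neq_ltn ltn_ord. Qed.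

Lemma win_lift_lt n (v : 'I_n.+1) (t : 'S_n) k : v < n ->
  winnable k (lift_perm ord_max v t) = winnable k t.
Proof.
move=> hv; rewrite /winnable; apply/existsP/existsP => [[j /and4P [H1 H2 H3 H4]] | [j /and4P [H1 H2 H3 H4]]].
  case: (unliftP ord_max j) H1 H2 H3 H4 => [j'|] -> H1 H2 H3 H4.
    exists j'; rewrite lift_max in H1; rewrite ltr_max_lift in H2.
    rewrite lift_perm_lift (lift_eq_top _ hv) in H4; rewrite H1 H2 H4 andbT /=.
    apply/forallP => i; have := forallP H3 (lift ord_max i).
    by rewrite !lift_max ltr_max_lift.
  by rewrite lift_perm_id /= in H4; move: hv; rewrite (eqP H4) ltnn.
exists (lift ord_max j); rewrite lift_max H1 ltr_max_lift H2 lift_perm_lift (lift_eq_top _ hv) H4 andbT /=.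
apply/forallP => i; case: (unliftP ord_max i) => [i'|] ->.
  by rewrite !lift_max ltr_max_lift; exact: (forallP H3 i').
by rewrite ord_max_ltn andbF.
Qed.

Definition gcond n k (t : 'S_n) := [forall i : 'I_n, (k <= i) ==> ~~ ltr_max t i].

Lemma win_lift_top n (t : 'S_n) k : k <= n ->
  winnable k (lift_perm ord_max ord_max t) = gcond k t.
Proof.
move=> hk; rewrite /winnable /gcond; apply/existsP/forallP => [[j /and4P [H1 H2 H3 H4]] i | H].
  case: (unliftP ord_max j) H1 H2 H3 H4 => [j'|] -> H1 H2 H3 H4.
    by rewrite lift_perm_lift lift_max_neq in H4.
  have := forallP H3 (lift ord_max i); rewrite !lift_max ltn_ord andbT ltr_max_lift.
  done.
exists ord_max; rewrite hk ltr_max_top eqxx lift_perm_id /= eqxx andbT /=.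
apply/forallP => i; case: (unliftP ord_max i) => [i'|] ->.
  by rewrite !lift_max ltr_max_lift ltn_ord andbT; exact: (H i').
by rewrite ltnn andbF.
Qed.

Lemma gcond_lift n (v : 'I_n.+1) (t : 'S_n) k : k <= n ->
  gcond k (lift_perm ord_max v t) = (v != ord_max) && gcond k t.
Proof.
move=> hk; rewrite /gcond; apply/forallP/andP => [H | [Hv H] i].
  split; first by have := H ord_max; rewrite ltr_max_top hk.
  by apply/forallP => i; have := H (lift ord_max i); rewrite lift_max ltr_max_lift.
case: (unliftP ord_max i) => [i'|] ->.
  by rewrite lift_max ltr_max_lift; exact: (forallP H i').
by rewrite ltr_max_top (negbTE Hv) implybT.
Qed.

Lemma gcond_top n (t : 'S_n) : gcond n t.
Proof. by apply/forallP => i; rewrite leqNgt ltn_ord. Qed.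

Lemma win_top n (t : 'S_n) : winnable n t = false.
Proof. by apply/negbTE/existsP => -[j /and4P [H1 _ _ _]]; move: H1; rewrite leqNgt ltn_ord. Qed.

End Aux.

Lemma lift_lt_max n (v : 'I_n) : lift ord_max v < n.
Proof. by rewrite lift_max ltn_ord. Qed.

Lemma lift_neq_max n (v : 'I_n) : (lift ord_max v != ord_max) = true.
Proof. by rewrite eq_sym neq_lift. Qed.

Lemma inv_lift_top n (t : 'S_n) : Defs.inv (lift_perm ord_max ord_max t) = Defs.inv t.
Proof. by rewrite !invE invs_lift /= subnn addn0. Qed.

Lemma inv_lift n (v : 'I_n.+1) (t : 'S_n) :
  Defs.inv (lift_perm ord_max v t) = (Defs.inv t + (n - v))%N.
Proof. by rewrite !invE invs_lift. Qed.

Local Open Scope ring_scope.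

Lemma sum_perm_split (R : comRingType) n (F : 'S_n.+1 -> R) :
  \sum_(s : 'S_n.+1) F s = \sum_(v : 'I_n.+1) \sum_(t : 'S_n) F (lift_perm ord_max v t).
Proof.
rewrite (partition_big (fun s : 'S_n.+1 => s ord_max) xpredT) //=.
apply: eq_bigr => j0 _.
rewrite (reindex (lift_perm ord_max j0)); last first.
  pose ulsf i (s : 'S_n.+1) k := odflt k (unlift (s i) (s (lift i k))).
  have ulsfK i (s : 'S_n.+1) k: lift (s i) (ulsf i s k) = s (lift i k).
    rewrite /ulsf; have:= neq_lift i k.
    by rewrite -(can_eq (permK s)) => /unlift_some[] ? ? ->.
  have inj_ulsf: injective (ulsf ord_max _).
    move=> s; apply: can_inj (ulsf (s ord_max) s^-1%g) _ => k'.
    by rewrite {1}/ulsf ulsfK !permK liftK.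
  exists (fun s => perm (inj_ulsf s)) => [s _ | s].
    by apply/permP=> k'; rewrite permE /ulsf lift_perm_lift lift_perm_id liftK.
  move/(s _ =P _) => si0; apply/permP=> k.
  case: (unliftP ord_max k) => [k'|] ->; rewrite ?lift_perm_id //.
  by rewrite lift_perm_lift -si0 permE ulsfK.
by apply: eq_bigl => t; rewrite lift_perm_id eqxx.
Qed.

Section Main.
Variables (R : comRingType) (theta : R).

Lemma sumr_recr_lift n (F : 'I_n.+1 -> R) :
  \sum_(i < n.+1) F i = \sum_(i < n) F (lift ord_max i) + F ord_max.
Proof. exact: big_recr_lift. Qed.

Definition Ws n k := \sum_(t : 'S_n | winnable k t) theta ^+ Defs.inv t.
Definition Gs n k := \sum_(t : 'S_n | gcond k t) theta ^+ Defs.inv t.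
Definition Ps n := \sum_(t : 'S_n) theta ^+ Defs.inv t.

Lemma sum_pow_rev n : \sum_(v < n.+1) theta ^+ (n - v) = qint theta n.+1.
Proof.
rewrite /qint (reindex_inj rev_ord_inj) /=; apply: eq_bigr => i _.
congr (_ ^+ _); have := ltn_ord i; lia.
Qed.

Lemma sum_pow_rev' n : \sum_(v < n) theta ^+ (n - lift ord_max v) = theta * qint theta n.
Proof.
rewrite /qint big_distrr (reindex_inj rev_ord_inj); apply: eq_bigr => i _.
rewrite lift_max /= -exprS; congr (_ ^+ _); have := ltn_ord i; lia.
Qed.

Lemma if_mul (b : bool) (x y : R) : (if b then x * y else 0) = (if b then x else 0) * y.
Proof. by case: b; rewrite ?mul0r. Qed.

Lemma Ps_rec n : Ps n.+1 = qint theta n.+1 * Ps n.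
Proof.
rewrite /Ps sum_perm_split.
under eq_bigr => v _ do under eq_bigr => t _ do rewrite inv_lift exprD.
under eq_bigr => v _ do rewrite -mulr_suml.
by rewrite /= -mulr_sumr mulrC sum_pow_rev.
Qed.

Lemma qfactS n : qfact theta n.+1 = qfact theta n * qint theta n.+1.
Proof. by rewrite /qfact big_nat_recr. Qed.

Lemma Ps_closed n : Ps n = qfact theta n.
Proof.
elim: n => [|n IH].
  rewrite /Ps /qfact big_geq //.
  under eq_bigr => t _ do rewrite invE /invs big_ord0 expr0.
  by rewrite sumr_const card_Sn.
by rewrite Ps_rec IH qfactS mulrC.
Qed.

Lemma Ws_rec n k : (k <= n)%N -> Ws n.+1 k = theta * qint theta n * Ws n k + Gs n k.
Proof.
move=> hk; rewrite /Ws /Gs big_mkcond sum_perm_split sumr_recr_lift; congr (_ + _).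
  under eq_bigr => v _ do under eq_bigr => t _ do
    rewrite (win_lift_lt _ _ (lift_lt_max v)) inv_lift exprD if_mul.
  under eq_bigr => v _ do rewrite -mulr_suml.
  by rewrite -mulr_sumr mulrC sum_pow_rev' [X in _ = _ * X]big_mkcond.
by rewrite [RHS]big_mkcond; apply: eq_bigr => t _; rewrite win_lift_top // inv_lift_top.
Qed.

Lemma Gs_rec n k : (k <= n)%N -> Gs n.+1 k = theta * qint theta n * Gs n k.
Proof.
move=> hk; rewrite /Gs big_mkcond sum_perm_split sumr_recr_lift.
rewrite [X in _ + X]big1 ?addr0; last by move=> t _; rewrite gcond_lift // eqxx.
under eq_bigr => v _ do under eq_bigr => t _ do
  rewrite gcond_lift // lift_neq_max /= inv_lift exprD if_mul.
under eq_bigr => v _ do rewrite -mulr_suml.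
by rewrite -mulr_sumr mulrC sum_pow_rev' [X in _ = _ * X]big_mkcond.
Qed.

Lemma Gs_top n : Gs n n = qfact theta n.
Proof. by rewrite -Ps_closed /Gs /Ps; apply: eq_bigl => t; rewrite gcond_top. Qed.

Lemma Ws_top n : Ws n n = 0.
Proof. by rewrite /Ws big_pred0 // => t; rewrite win_top. Qed.

Lemma qint0 : qint theta 0 = 0.
Proof. by rewrite /qint big_ord0. Qed.


Lemma Gs_closed n k : (k <= n.+1)%N ->
  Gs n.+1 k = theta ^+ (n.+1 - k) * qint theta k * qfact theta n.
Proof.
elim: n k => [|n IH] k hk.
  case: k hk => [|[|]] // _; last by rewrite Gs_top subnn expr0 mul1r qfactS mulrC.
  by rewrite Gs_rec // qint0 !mulr0 !mul0r.
move: hk; rewrite leq_eqVlt => /orP [/eqP -> | hk].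
  by rewrite Gs_top subnn expr0 mul1r qfactS mulrC.
rewrite Gs_rec // IH // qfactS; have -> : (n.+2 - k = (n.+1 - k).+1)%N by lia.
rewrite exprS; ring.
Qed.

Lemma W_Ws n k : (k <= n)%N -> W theta n k = Ws n k.
Proof.
rewrite /W leq_eqVlt => /orP [/eqP -> | ->] //.
by rewrite ltnn Ws_top.
Qed.

End Main.

Theorem theorem6p3 (R : comRingType) (theta : R) :
  W theta 1 0 = 1 /\
  (forall N k : nat, (2 <= N)%N -> (k <= N.-1)%N ->
     W theta N k =
       theta * qint theta N.-1 * W theta N.-1 k
       + theta ^+ (N - k - 1) * qint theta k * qfact theta (N - 2)).
Proof.
split.
  by rewrite W_Ws // Ws_rec // qint0 mulr0 mul0r add0r Gs_top /qfact big_geq.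
case=> [|[|m]] // k _ /= hk.
rewrite W_Ws ?(leq_trans hk) // Ws_rec // W_Ws // Gs_closed //.
have -> : (m.+2 - k - 1 = m.+1 - k)%N by lia.
have -> : (m.+2 - 2 = m)%N by lia.
by [].
Qed.
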